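(* Let $X\in\mathbb{R}^{n\times p}$, $\mathbf y\in\mathbb{R}^n$ with $\mathbf y\ne\mathbf 0$, and $\|X^T\mathbf y\|_\infty>\lambda_1>0$. Suppose $\boldsymbol\theta_1^*\ne\frac{\mathbf y}{\|X^T\mathbf y\|_\infty}$, and let $\mathbf a=\frac{\mathbf y}{\lambda_1}-\boldsymbol\theta_1^*$. For $\lambda\in(0,\lambda_1]$ define $$f(\lambda)=\frac{\langle\frac{\mathbf y}{\lambda}-\boldsymbol\theta_1^*,\mathbf a\rangle}{\|\frac{\mathbf y}{\lambda}-\boldsymbol\theta_1^*\|_2},\qquad g(\lambda)=\frac{\langle\frac{\mathbf y}{\lambda}-\boldsymbol\theta_1^*,\mathbf y\rangle}{\|\frac{\mathbf y}{\lambda}-\boldsymbol\theta_1^*\|_2}.$$ Then $f$ is strictly increasing on $(0,\lambda_1]$ and $g$ is strictly decreasing on $(0,\lambda_1]$.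
   Context: Let $F=\{\boldsymbol\theta\in\mathbb{R}^n:\|X^T\boldsymbol\theta\|_\infty\le 1\}$. For $\lambda>0$, the Lasso dual optimum $\boldsymbol\theta^*(\lambda)$ is the unique minimizer of $\frac12\|\boldsymbol\theta-\mathbf y/\lambda\|_2^2$ over $\boldsymbol\theta\in F$, i.e. the Euclidean projection of $\mathbf y/\lambda$ onto $F$. Write $\boldsymbol\theta_1^*=\boldsymbol\theta^*(\lambda_1)$. *)

(* Defs.v *)
(* real closed field R (generalizes the reals; statement is algebraic). *)
From HB Require Import structures.
From mathcomp Require Import all_boot all_order all_algebra.
Set Implicit Arguments. Unset Strict Implicit. Unset Printing Implicit Defensive.
Import Order.TTheory GRing.Theory Num.Theory.
Local Open Scope ring_scope.

Definition dotv (R : rcfType) (n : nat) (u v : 'cV[R]_n) : R :=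
  \sum_(i < n) u i 0 * v i 0.

Definition norm2 (R : rcfType) (n : nat) (u : 'cV[R]_n) : R :=
  Num.sqrt (dotv u u).

(* sup norm ||u||_inf (= 0 for the empty vector) *)
Definition norminf (R : rcfType) (n : nat) (u : 'cV[R]_n) : R :=
  \big[Num.max/0]_(i < n) `|u i 0|.

Definition inF (R : rcfType) (n p : nat) (X : 'M[R]_(n, p)) (th : 'cV[R]_n) : Prop :=
  norminf (X^T *m th) <= 1.

Definition is_proj_F (R : rcfType) (n p : nat) (X : 'M[R]_(n, p))
  (v th : 'cV[R]_n) : Prop :=
  inF X th /\ forall th' : 'cV[R]_n, inF X th' ->
    norm2 (th - v) ^+ 2 / 2 <= norm2 (th' - v) ^+ 2 / 2.

(* Lasso dual optimum theta*(lambda): projection of y/lambda onto F *)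
Definition is_dual_opt (R : rcfType) (n p : nat) (X : 'M[R]_(n, p))
  (y : 'cV[R]_n) (lam : R) (th : 'cV[R]_n) : Prop :=
  is_proj_F X (lam^-1 *: y) th.

(* Main.v *)
Require Import Defs.
From HB Require Import structures.
From mathcomp Require Import all_boot all_order all_algebra.
From mathcomp Require Import ring lra.
Import Order.TTheory GRing.Theory Num.Theory.
Local Open Scope ring_scope.


Lemma cmp_lt (R : rcfType) (x y : R) :
  (x < 0 /\ 0 <= y) \/ (0 <= x /\ 0 <= y /\ x^+2 < y^+2) \/
  (x < 0 /\ y < 0 /\ y^+2 < x^+2) -> x < y.
Proof. case=> [[? ?]|[[? [? ?]]|[? [? ?]]]]; nra. Qed.

Lemma sc_g (R : rcfType) (A B Y s1 s2 : R) : 0 < Y -> 0 < A*Y - B^+2 -> s1 < s2 ->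
  (B + s1*Y) / Num.sqrt (A + 2*s1*B + s1^+2*Y) <
  (B + s2*Y) / Num.sqrt (A + 2*s2*B + s2^+2*Y).
Proof.
move=> Y0 D0 s12.
set p1 := B + s1*Y; set p2 := B + s2*Y.
set q1 := A + 2*s1*B + s1^+2*Y; set q2 := A + 2*s2*B + s2^+2*Y.
have e1 : Y * q1 = p1^+2 + (A*Y - B^+2) by rewrite /p1 /q1; ring.
have e2 : Y * q2 = p2^+2 + (A*Y - B^+2) by rewrite /p2 /q2; ring.
have q1p : 0 < q1 by nra.
have q2p : 0 < q2 by nra.
have N1p := q1p; rewrite -sqrtr_gt0 in N1p.
have N2p := q2p; rewrite -sqrtr_gt0 in N2p.
have N1s := sqr_sqrtr (ltW q1p). have N2s := sqr_sqrtr (ltW q2p).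
set N1 := Num.sqrt q1 in N1p N1s *; set N2 := Num.sqrt q2 in N2p N2s *.
rewrite ltr_pdivrMr // mulrAC ltr_pdivlMr //.
have p12 : p1 < p2 by rewrite /p1 /p2; nra.
have key : Y * ((p2 * N1)^+2 - (p1*N2)^+2) = (A*Y - B^+2) * (p2^+2 - p1^+2).
  by rewrite !exprMn N1s N2s; rewrite mulrBr mulrCA e1 mulrCA e2; ring.
apply: cmp_lt.
have [h1|h1] := ltP p1 0; have [h2|h2] := ltP p2 0.
- right; right; split; [nra|split; [nra|]].
  have d : 0 < p1^+2 - p2^+2 by nra.
  have := mulr_gt0 D0 d.
  have : Y * ((p1*N2)^+2 - (p2 * N1)^+2) = (A*Y - B^+2) * (p1^+2 - p2^+2).
    by rewrite -opprB mulrN key -mulrN opprB.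
  nra.
- left; split; nra.
- nra.
- right; left; split; [nra|split; [nra|]].
  have d : 0 < p2^+2 - p1^+2 by nra.
  have := mulr_gt0 D0 d.
  nra.
Qed.

Lemma sc_f (R : rcfType) (A B Y s1 s2 : R) : 0 < A -> 0 < A*Y - B^+2 -> 0 <= s1 -> s1 < s2 ->
  (A + s2*B) / Num.sqrt (A + 2*s2*B + s2^+2*Y) <
  (A + s1*B) / Num.sqrt (A + 2*s1*B + s1^+2*Y).
Proof.
move=> A0 D0 s10 s12.
have Y0 : 0 < Y by nra.
set p1 := A + s1*B; set p2 := A + s2*B.
set q1 := A + 2*s1*B + s1^+2*Y; set q2 := A + 2*s2*B + s2^+2*Y.
have e1 : Y * q1 = (B + s1*Y)^+2 + (A*Y - B^+2) by rewrite /q1; ring.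
have e2 : Y * q2 = (B + s2*Y)^+2 + (A*Y - B^+2) by rewrite /q2; ring.
have f1 : A * q1 = p1^+2 + s1^+2 * (A*Y - B^+2) by rewrite /p1 /q1; ring.
have f2 : A * q2 = p2^+2 + s2^+2 * (A*Y - B^+2) by rewrite /p2 /q2; ring.
have q1p : 0 < q1 by rewrite -(pmulr_rgt0 _ Y0) e1; have := sqr_ge0 (B + s1*Y); lra.
have q2p : 0 < q2 by rewrite -(pmulr_rgt0 _ Y0) e2; have := sqr_ge0 (B + s2*Y); lra.
have N1p := q1p; rewrite -sqrtr_gt0 in N1p.
have N2p := q2p; rewrite -sqrtr_gt0 in N2p.
have N1s := sqr_sqrtr (ltW q1p). have N2s := sqr_sqrtr (ltW q2p).
set N1 := Num.sqrt q1 in N1p N1s *; set N2 := Num.sqrt q2 in N2p N2s *.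
rewrite ltr_pdivrMr // mulrAC ltr_pdivlMr //.
have ps : p1 * s2 - p2 * s1 = A * (s2 - s1) by rewrite /p1 /p2; ring.
have psp : p2 * s1 < p1 * s2 by rewrite -subr_gt0 ps mulr_gt0 // subr_gt0.
have key : A * ((p1 * N2)^+2 - (p2*N1)^+2) = (A*Y - B^+2) * ((p1*s2)^+2 - (p2*s1)^+2).
  by rewrite !exprMn N1s N2s; rewrite mulrBr mulrCA f2 mulrCA f1; ring.
apply: cmp_lt.
have [h1|h1] := ltP p1 0; have [h2|h2] := ltP p2 0.
- right; right; split; [nra|split; [nra|]].
  have s1p : 0 < s1 by rewrite lt_def; apply/andP; split=> //; apply/eqP=> s0;
    move: h1; rewrite /p1 s0; nra.
  have h3 : p1 * s2 < 0 by rewrite nmulr_rlt0 //; lra.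
  have d : 0 < (p2*s1)^+2 - (p1*s2)^+2.
    move: psp h3; set x := p2*s1; set y := p1*s2; nra.
  have := mulr_gt0 D0 d.
  have : A * ((p2*N1)^+2 - (p1*N2)^+2) = (A*Y - B^+2) * ((p2*s1)^+2 - (p1*s2)^+2).
    by rewrite -opprB mulrN key -mulrN opprB.
  nra.
- exfalso; nra.
- left; split; nra.
- right; left; split; [nra|split; [nra|]].
  have h3 : 0 <= p2 * s1 by rewrite mulr_ge0.
  have d : 0 < (p1*s2)^+2 - (p2*s1)^+2.
    move: psp h3; set x := p2*s1; set y := p1*s2; nra.
  have := mulr_gt0 D0 d.
  nra.
Qed.
Section V.
Variables (R : rcfType) (n : nat).
Implicit Types (u v w : 'cV[R]_n).
Lemma dotvC u v : dotv u v = dotv v u.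
Proof. by apply: eq_bigr => i _; rewrite mulrC. Qed.
Lemma dotvDl u v w : dotv (u + v) w = dotv u w + dotv v w.
Proof. by rewrite /dotv -big_split; apply: eq_bigr => i _; rewrite mxE mulrDl. Qed.
Lemma dotvZl k u w : dotv (k *: u) w = k * dotv u w.
Proof. by rewrite /dotv mulr_sumr; apply: eq_bigr => i _; rewrite mxE mulrA. Qed.
Lemma dotvNl u w : dotv (- u) w = - dotv u w.
Proof. by rewrite -scaleN1r dotvZl mulN1r. Qed.
Lemma dotvBl u v w : dotv (u - v) w = dotv u w - dotv v w.
Proof. by rewrite dotvDl dotvNl. Qed.
Lemma dotv_ge0 u : 0 <= dotv u u.
Proof. by apply: sumr_ge0 => i _; rewrite -expr2 sqr_ge0. Qed.
Lemma dotv_eq0 u : dotv u u = 0 -> u = 0.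
Proof.
move=> /eqP; rewrite psumr_eq0 => [/allP h|i _]; last by rewrite -expr2 sqr_ge0.
apply/matrixP=> i j; rewrite (ord1 j) mxE.
have := h i (mem_index_enum i). rewrite -expr2 sqrf_eq0 /=. by move/eqP.
Qed.
Lemma norm2_sq u : norm2 u ^+ 2 = dotv u u.
Proof. by rewrite /norm2 sqr_sqrtr // dotv_ge0. Qed.
End V.
Arguments dotvC {R n}.
Arguments dotvDl {R n}.
Arguments dotvZl {R n}.
Arguments dotvNl {R n}.
Arguments dotvBl {R n}.
Arguments dotv_ge0 {R n}.
Arguments dotv_eq0 {R n}.
Arguments norm2_sq {R n}.

Lemma norminfZ (R : rcfType) (n : nat) (k : R) (v : 'cV[R]_n) : 0 <= k ->
  norminf (k *: v) = k * norminf v.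
Proof.
move=> k0; rewrite /norminf (big_morph (fun x => k * x) (fun y z => maxr_pMr y z k0) (mulr0 k)).
by apply: eq_bigr => i _; rewrite mxE normrM ger0_norm.
Qed.

Lemma dotvDr (R : rcfType) (n : nat) (u v w : 'cV[R]_n) : dotv w (u + v) = dotv w u + dotv w v.
Proof. by rewrite dotvC dotvDl !(dotvC w). Qed.
Lemma dotvZr (R : rcfType) (n : nat) k (u w : 'cV[R]_n) : dotv w (k *: u) = k * dotv w u.
Proof. by rewrite dotvC dotvZl dotvC. Qed.

Lemma dq1 (R : rcfType) (n : nat) (a y : 'cV[R]_n) s :
  dotv (a + s*:y) (a + s*:y) = dotv a a + 2*s*dotv a y + s^+2 * dotv y y.
Proof. rewrite !dotvDl !dotvDr !dotvZl !dotvZr (dotvC y a); ring. Qed.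
Lemma dq2 (R : rcfType) (n : nat) (a y : 'cV[R]_n) s :
  dotv (a + s*:y) a = dotv a a + s*dotv a y.
Proof. by rewrite !dotvDl !dotvZl (dotvC y a). Qed.
Lemma dq3 (R : rcfType) (n : nat) (a y : 'cV[R]_n) s :
  dotv (a + s*:y) y = dotv a y + s*dotv y y.
Proof. by rewrite !dotvDl !dotvZl. Qed.

Theorem lemma5 (R : rcfType) (n p : nat) (X : 'M[R]_(n, p)) (y : 'cV[R]_n)
  (lam1 : R) (th1 : 'cV[R]_n) :
  y != 0 ->
  0 < lam1 -> lam1 < norminf (X^T *m y) ->
  is_dual_opt X y lam1 th1 ->
  th1 != (norminf (X^T *m y))^-1 *: y ->
  let a := lam1^-1 *: y - th1 in
  let f := fun lam : R =>
    dotv (lam^-1 *: y - th1) a / norm2 (lam^-1 *: y - th1) in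
  let g := fun lam : R =>
    dotv (lam^-1 *: y - th1) y / norm2 (lam^-1 *: y - th1) in
  (forall l l' : R, 0 < l -> l < l' -> l' <= lam1 -> f l < f l') /\
  (forall l l' : R, 0 < l -> l < l' -> l' <= lam1 -> g l' < g l).
Proof.
move=> yn0 l10 l1lt [inF1 opt] thne a f g.
set lm := norminf (X^T *m y) in l1lt thne.
have lm0 : 0 < lm by apply: lt_trans l1lt.
set t1 := lam1^-1.
have t1lm : lm^-1 < t1 by rewrite /t1 ltf_pV2 // posrE.
have lmi0 : 0 < lm^-1 by rewrite invr_gt0.
set A := dotv a a; set B := dotv a y; set Y := dotv y y.
have Y0 : 0 < Y.
  rewrite lt_def dotv_ge0 andbT; apply/eqP => /dotv_eq0 h; by rewrite h eqxx in yn0.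
have dZZ : forall k, dotv (k *: y) (k *: y) = k^+2 * Y.
  by move=> k; rewrite dotvZl dotvZr mulrA -expr2.
have D0 : 0 < A * Y - B^+2.
  rewrite ltNge; apply/negP => hD.
  set c := B / Y.
  have ew : dotv (a - c *: y) (a - c *: y) = (A * Y - B^+2) / Y.
    rewrite -scaleNr dq1 -/A -/B -/Y /c.
    by field; rewrite gt_eqF.
  have hw : a - c *: y = 0.
    apply: dotv_eq0; apply/eqP; rewrite eq_le dotv_ge0 andbT ew.
    by rewrite pmulr_lle0 ?invr_gt0.
  have eth : th1 = (t1 - c) *: y.
    move/eqP: hw; rewrite subr_eq0 /a => /eqP h.
    by rewrite scalerBl -h opprB addrC subrK.
  set be := t1 - c in eth.
  have [hb|hb|hb] := ltgtP be lm^-1.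
  - have inF' : inF X (lm^-1 *: y).
      by rewrite /inF -scalemxAr norminfZ ?mulVf ?gt_eqF // ltW.
    have := opt _ inF'.
    rewrite !norm2_sq eth -!scalerBl !dZZ.
    have h1 : (lm^-1 - t1)^+2 < (be - t1)^+2.
      rewrite -sqrrN opprB -(sqrrN (be - t1)) opprB !expr2.
      by apply: ltr_pM; rewrite ?subr_ge0 ?ltW // ltrD2l ltrN2.
    move=> h; rewrite -/t1 in h; have : (lm^-1 - t1)^+2 * Y < (be - t1)^+2 * Y by rewrite ltr_pM2r.
    lra.
  - move: inF1; rewrite /inF eth -scalemxAr norminfZ; last by apply: ltW; apply: lt_trans hb.
    rewrite -/lm; apply/negP; rewrite -ltNge.
    by move: hb; rewrite -(ltr_pM2r lm0) mulVf // gt_eqF.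
  - by rewrite eth hb eqxx in thne.
have A0 : 0 < A.
  have : 0 <= B^+2 by apply: sqr_ge0.
  have : 0 <= A by apply: dotv_ge0.
  nra.
have decomp : forall l, l^-1 *: y - th1 = a + (l^-1 - t1) *: y.
  by move=> l; rewrite /a scalerBl [RHS]addrC addrA subrK.
have Hf : forall s, dotv (a + s*:y) a / norm2 (a + s*:y) =
    (A + s*B)/Num.sqrt (A + 2*s*B + s^+2*Y).
  by move=> s; rewrite /norm2 dq1 ?dq2 ?dq3.
have Hg : forall s, dotv (a + s*:y) y / norm2 (a + s*:y) =
    (B + s*Y)/Num.sqrt (A + 2*s*B + s^+2*Y).
  by move=> s; rewrite /norm2 dq1 ?dq2 ?dq3.
have mono : forall l l', 0 < l -> l < l' -> l' <= lam1 ->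
    0 <= l'^-1 - t1 /\ l'^-1 - t1 < l^-1 - t1.
  move=> l l' l0 ll' l'l1; have l'0 : 0 < l' by apply: lt_trans ll'.
  split; first by rewrite subr_ge0 /t1 lef_pV2 // posrE.
  by rewrite ltrD2r ltf_pV2 // posrE.
split=> l l' l0 ll' l'l1; have [s10 s12] := mono _ _ l0 ll' l'l1.
- by rewrite /f !decomp !Hf; apply: sc_f.
- by rewrite /g !decomp !Hg; apply: sc_g.
Qed.
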